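(* Let $\widehat{\mathcal{G}}$ be a simple directed graph on $N$ vertices with adjacency matrix $A=A(\widehat{\mathcal{G}})\in\mathbb{R}^{N\times N}$, where $A_{ij}=1$ if there is an edge from $j$ to $i$ and $A_{ij}=0$ otherwise, and with vertices ordered so that the zero columns of $A$ (corresponding to the sinks) are the last columns. Let $\Pi_0=\{\mathcal{T}^{(0)}_1,\dots,\mathcal{T}^{(0)}_{|\Pi_0|}\}$, $|\Pi_0|=N-|\mathcal{S}_{\mathrm{in}}(\widehat{\mathcal{G}})|$, where $\mathcal{T}^{(0)}_k$ is the pseudotree consisting of vertex $k$, all out-neighbors of $k$, and all edges from $k$ to its out-neighbors. For $i,j\in\{1,\dots,|\Pi_0|\}$ let $$a_{ij}=\big([A+I\mathfrak{i}]_{\star i}\big)^\top[A+I\mathfrak{i}]_{\star j},$$ where $\mathfrak{i}$ is the imaginary unit and $[\,\cdot\,]_{\star i}$ denotes the $i$-th column (plain transpose, no conjugation). Then the characteristic matrix $\mathscr{M}^{(0)}$ of $\Pi_0$ satisfies $\mathscr{M}^{(0)}_{ii}=0$ for all $i$, and for $j\ne i$: $\mathscr{M}^{(0)}_{ij}=1$ if $\operatorname{Re}(a_{ij})=0$, $\operatorname{Im}(a_{ij})\ne0$ and $A_{ij}\ne0$; $\mathscr{M}^{(0)}_{ij}=0$ if $\operatorname{Re}(a_{ij})\ne0$, or if ($\operatorname{Re}(a_{ij})=0$, $\operatorname{Im}(a_{ij})\ne0$ and $A_{ij}=0$); $\mathscr{M}^{(0)}_{ij}=\varnothing$ if $a_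{ij}=0$.
   Context: $\mathcal{S}_{\mathrm{in}}(\widehat{\mathcal{G}})$ is the set of sinks (vertices with no out-neighbors). A pseudotree is a connected (underlying undirected graph connected) simple directed graph $\mathcal{T}$ with $|V(\mathcal{T})|\ge2$ in which every vertex has at most one in-neighbor in $\mathcal{T}$; a root of $\mathcal{T}$ is a vertex from which there is exactly one directed path to every other vertex of $\mathcal{T}$, and $\Upsilon(\mathcal{T})$ is the set of roots. Two pseudotree subgraphs $\mathcal{T}_1,\mathcal{T}_2$ are disjoint if $E(\mathcal{T}_1)\cap E(\mathcal{T}_2)=\emptyset$ and for every vertex $j\in V(\mathcal{T}_1)\cup V(\mathcal{T}_2)$ the edges of $E(\mathcal{T}_1)\cup E(\mathcal{T}_2)$ leaving $j$ all lie in one of $E(\mathcal{T}_1)$, $E(\mathcal{T}_2)$. Mergeability: for two disjoint pseudotrees $\mathcal{T}_1,\mathcal{T}_2$ with $V(\mathcal{T}_1)\cap V(\mathcal{T}_2)\ne\emptyset$, $\mathcal{T}_1$ is mergeable to $\mathcal{T}_2$ if the union graph $(V(\mathcal{T}_1)\cup V(\mathcal{T}_2),E(\mathcal{T}_1)\cup E(\mathcal{T}_2))$ is a pseudotree and there is a directed path from every vertex of $\Upsilon(\mathcal{T}_2)$ to every vertex of $V(\mathcal{T}_1)$. Characteristic matrix: for a disjoint pseudotree covering $\Pi=\{\mathcal{T}_1,\dots,\mathcal{T}_n\}$ of a directed graph, its characteristic matrix $\mathscr{M}\in\{1,0,\varnothing\}^{n\times n}$ has $\mathscr{M}_{ij}=1$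 if $\mathcal{T}_i$ is mergeable to $\mathcal{T}_j$, $\mathscr{M}_{ij}=\varnothing$ (a formal symbol) if $V(\mathcal{T}_j)\cap V(\mathcal{T}_i)=\emptyset$, and $\mathscr{M}_{ij}=0$ otherwise. *)

(* Defs.v *)
From Stdlib Require Import ClassicalEpsilon.
From mathcomp Require Import all_boot all_order all_algebra all_field.
Set Implicit Arguments. Unset Strict Implicit. Unset Printing Implicit Defensive.
Import GRing.Theory Num.Theory.

(* Vertices of the graph are 'I_N; [e u v] means there is an edge u -> v. *)

Record subgraph (N : nat) := Subgraph {
  sv : {set 'I_N};
  se : {set 'I_N * 'I_N} }.

Definition sink N (e : rel 'I_N) (k : 'I_N) : bool := [forall u, ~~ e k u].

(* a directed path (no repeated vertices) from u to v using edges in E,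
   given by the list of vertices after u *)
Definition dpath N (E : {set 'I_N * 'I_N}) (u v : 'I_N) (p : seq 'I_N) : Prop :=
  [/\ path (fun x y => (x, y) \in E) u p, last u p = v & uniq (u :: p)].

Definition undir N (T : subgraph N) : rel 'I_N :=
  fun x y => ((x, y) \in se T) || ((y, x) \in se T).

Definition pseudotree N (T : subgraph N) : Prop :=
  [/\ (forall x, x \in se T -> (x.1 \in sv T) && (x.2 \in sv T)),
      (forall x, x \in se T -> x.1 != x.2),
      2 <= #|sv T|,
      (forall u v, u \in sv T -> v \in sv T -> connect (undir T) u v)
    & (forall v, v \in sv T -> #|[set u | (u, v) \in se T]| <= 1)].

Definition is_root N (T : subgraph N) (r : 'I_N) : Prop :=
  r \in sv T /\
  forall v, v \in sv T -> v != r -> exists! p, dpath (se T) r v p.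

Definition disjoint_pt N (T1 T2 : subgraph N) : Prop :=
  [disjoint se T1 & se T2] /\
  forall j, j \in sv T1 :|: sv T2 ->
    (forall u, (j, u) \in se T1 :|: se T2 -> (j, u) \in se T1) \/
    (forall u, (j, u) \in se T1 :|: se T2 -> (j, u) \in se T2).

Definition union_sg N (T1 T2 : subgraph N) : subgraph N :=
  Subgraph (sv T1 :|: sv T2) (se T1 :|: se T2).

Definition mergeable N (T1 T2 : subgraph N) : Prop :=
  [/\ pseudotree T1 /\ pseudotree T2, disjoint_pt T1 T2,
      sv T1 :&: sv T2 != set0,
      pseudotree (union_sg T1 T2)
    & forall r, is_root T2 r -> forall v, v \in sv T1 ->
        exists p, dpath (se T1 :|: se T2) r v p].

Inductive charval := CVone | CVzero | CVempty.

Definition char_entry N (Ti Tj : subgraph N) : charval :=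
  if excluded_middle_informative (mergeable Ti Tj) then CVone
  else if [disjoint sv Tj & sv Ti] then CVempty else CVzero.

Definition star0 N (e : rel 'I_N) (k : 'I_N) : subgraph N :=
  Subgraph (k |: [set u | e k u]) [set x | (x.1 == k) && e k x.2].

(* characteristic matrix of Pi_0 (indexed by the non-sink vertices) *)
Definition charM0 N (e : rel 'I_N) (i j : 'I_N) : charval :=
  char_entry (star0 e i) (star0 e j).

Local Open Scope ring_scope.
Definition adjmx N (e : rel 'I_N) : 'M[algC]_N := \matrix_(i, j) ((e j i)%:R).

Definition aval N (e : rel 'I_N) (i j : 'I_N) : algC :=
  let B := adjmx e + ('i)%:M in ((col i B)^T *m col j B) 0 0.

(* Main.v *)
Require Import Defs.
From Stdlib Require Import ClassicalEpsilon.
From mathcomp Require Import all_boot all_order all_algebra all_field.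
From mathcomp Require Import ring zify.
Import GRing.Theory Num.Theory.

Section G.
Variables (N : nat) (e : rel 'I_N) (Hs : irreflexive e).
Local Notation T := (star0 e).

Lemma nonsink_ex k : ~~ sink e k -> exists u, e k u.
Proof. by rewrite /sink negb_forall => /existsP [u]; rewrite negbK; exists u. Qed.

Lemma star_pt k : ~~ sink e k -> pseudotree (T k).
Proof.
move=> /nonsink_ex [u eku].
have ku : k != u by apply: contraTneq eku => <-; rewrite Hs.
split.
- by move=> [a b]; rewrite !inE /= => /andP [/eqP -> ekb]; rewrite eqxx ekb orbT.
- by move=> [a b]; rewrite !inE /= => /andP [/eqP -> ekb]; apply: contraTneq ekb => <-; rewrite Hs.
- rewrite (leq_trans _ (subset_leq_card (_ : [set k; u] \subset _))) ?cards2 ?ku //.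
  by apply/subsetP => x; rewrite !inE => /orP [] /eqP ->; rewrite ?eqxx ?eku ?orbT.
- move=> a b; rewrite !inE => Ha Hb; apply: (connect_trans (y:=k)).
  + case/orP: Ha => [/eqP ->|eka]; first exact: connect0.
    by apply: connect1; rewrite /undir !inE /= eqxx eka orbT.
  + case/orP: Hb => [/eqP ->|ekb]; first exact: connect0.
    by apply: connect1; rewrite /undir !inE /= eqxx ekb.
- move=> v _; rewrite (leq_trans (subset_leq_card (_ : _ \subset [set k]))) ?cards1 //.
  by apply/subsetP => x; rewrite !inE /= => /andP [].
Qed.

Lemma star_dpath k v p : dpath (se (T k)) k v p -> v != k -> p = [:: v].
Proof.
case: p => [|x [|y p]] [] /=.
- by move=> _ <- _; rewrite eqxx.
- by move=> _ -> _.
- rewrite !inE /= => /and3P [_ /andP [/eqP xk _] _] _ /andP [H _].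
  by move: H; rewrite xk eqxx.
Qed.

Lemma star_root k : is_root (T k) k.
Proof.
split; first by rewrite !inE eqxx.
move=> v; rewrite !inE => /orP [/eqP -> |ekv]; first by rewrite eqxx.
move=> vk; exists [:: v]; split.
- by split => //=; rewrite ?andbT !inE /= ?eqxx ?ekv // eq_sym.
- by move=> p Hp; rewrite (@star_dpath k v p Hp vk).
Qed.

Lemma star_root_only k r : is_root (T k) r -> r = k.
Proof.
move=> [Hr H]; apply/eqP; apply: contraT => rk.
have := H k; rewrite !inE eqxx /= => /(_ isT); rewrite eq_sym rk => /(_ isT).
move=> [[|x p] [[Hp Hl Hu] _]] /=.
- by rewrite /= in Hl; rewrite Hl eqxx in rk.
- by move: Hp; rewrite /= !inE /= (negbTE rk).
Qed.

Lemma nomerge_noedge i j : ~~ e j i -> i != j -> ~ mergeable (T i) (T j).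
Proof.
move=> nji ij [_ _ _ _ H].
have Hi : i \in sv (T i) by rewrite !inE eqxx.
have [p [Hp Hl Hu]] := H j (star_root j) i Hi.
case: p Hp Hl Hu => [|x [|y p]] /=.
- by move=> _ ji; rewrite ji eqxx in ij.
- rewrite !inE /= eqxx (eq_sym j i) (negbTE ij) /= andbT => ejx xi.
  by rewrite -xi ejx in nji.
- rewrite !inE /= eqxx (eq_sym j i) (negbTE ij) /= => /and3P [ejx Hxy _] _.
  case/orP: Hxy => /andP [/eqP xe _].
  + by move=> _; rewrite -xe ejx in nji.
  + by rewrite xe eqxx.
Qed.

Lemma nomerge_common i j u : e i u -> e j u -> i != j -> ~ mergeable (T i) (T j).
Proof.
move=> eiu eju ij [_ _ _ [_ _ _ _ Hin] _].
have := Hin u; rewrite /= !inE eiu orbT => /(_ isT).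
rewrite leqNgt => /negP; apply.
apply: (@leq_trans #|[set i; j]|); first by rewrite cards2 ij.
apply: subset_leq_card.
by apply/subsetP => x; rewrite !inE /= => /orP [] /eqP ->; rewrite !eqxx ?eiu ?eju ?orbT.
Qed.

Lemma nomerge_self i : ~~ sink e i -> ~ mergeable (T i) (T i).
Proof.
move=> /nonsink_ex [u eiu] [_ [Hd _] _ _ _].
have Hm : (i, u) \in se (T i) by rewrite !inE /= eqxx eiu.
by have := disjointFr Hd Hm; rewrite Hm.
Qed.

Lemma merge i j : ~~ sink e i -> ~~ sink e j -> i != j -> e j i ->
  (forall u, ~~ (e i u && e j u)) -> mergeable (T i) (T j).
Proof.
move=> si sj ij eji nc.
have ji : j != i by rewrite eq_sym.
split.
- by split; apply: star_pt.
- split.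
  + rewrite disjoint_subset; apply/subsetP => [[a b]]; rewrite !inE /=.
    by case/andP => /eqP -> _; rewrite (negbTE ij).
  + move=> k _; case: (eqVneq k i) => [->|ki].
    * by left => u; rewrite !inE /= (negbTE ij) /= orbF.
    * by right => u; rewrite !inE /= (negbTE ki).
- by apply/set0Pn; exists i; rewrite !inE eqxx eji orbT.
- have [u eiu] := @nonsink_ex i si.
  split.
  + move=> [a b]; rewrite /= !inE /= => /orP [] /andP [/eqP -> eb];
      by rewrite eqxx eb !orbT.
  + move=> [a b]; rewrite /= !inE /= => /orP [] /andP [/eqP -> eb];
      by apply: contraTneq eb => <-; rewrite Hs.
  + have := (@star_pt i si); case => _ _ H2 _ _.
    apply: (leq_trans H2); apply: subset_leq_card; apply/subsetP => x.
    by rewrite /= !inE => ->.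
  + have Hu : forall a, a \in sv (union_sg (T i) (T j)) -> connect (undir (union_sg (T i) (T j))) a j.
      move=> a; rewrite /= !inE.
      have Hij : connect (undir (union_sg (T i) (T j))) i j.
        by apply: connect1; rewrite /undir /= !inE /= !eqxx eji !orbT.
      case/orP => [/orP [/eqP -> // | eia] | /orP [/eqP -> | eja]].
      * apply: (connect_trans _ Hij); apply: connect1.
        by rewrite /undir /= !inE /= !eqxx eia !orbT.
      * exact: connect0.
      * by apply: connect1; rewrite /undir /= !inE /= !eqxx eja !orbT.
    have Hsym : connect_sym (undir (union_sg (T i) (T j))).
      by apply: sym_connect_sym => x y; rewrite /undir orbC.
    by move=> a b Ha Hb; apply: (connect_trans (Hu a Ha)); rewrite Hsym; apply: Hu.
  + move=> v _.
    case eiv: (e i v).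
    * rewrite (leq_trans (subset_leq_card (_ : _ \subset [set i]))) ?cards1 //.
      apply/subsetP => x; rewrite !inE /= => /orP [/andP [] // | /andP [/eqP -> ejv]].
      by have := nc v; rewrite eiv ejv.
    * rewrite (leq_trans (subset_leq_card (_ : _ \subset [set j]))) ?cards1 //.
      apply/subsetP => x; rewrite !inE /= eiv => /orP [/andP [] // | /andP [] //].
- move=> r /star_root_only -> v; rewrite !inE => /orP [/eqP -> | eiv].
  + exists [:: i]; split => //=; rewrite ?inE /= ?eqxx ?eji ?orbT //.
    by rewrite ji.
  + case: (eqVneq v j) => [-> | vj].
    * by exists [::].
    * have iv : i != v by apply: contraTneq eiv => <-; rewrite Hs.
      exists [:: i; v]; split => //=; rewrite ?inE /= ?eqxx ?eji ?eiv ?orbT //.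
      by rewrite (negbTE ji) (eq_sym j v) (negbTE vj) iv.
Qed.

End G.

Lemma entry_one N (e : rel 'I_N) i j : mergeable (star0 e i) (star0 e j) -> charM0 e i j = CVone.
Proof. by rewrite /charM0 /char_entry; case: excluded_middle_informative. Qed.

Lemma entry_zero N (e : rel 'I_N) i j x : ~ mergeable (star0 e i) (star0 e j) ->
  x \in sv (star0 e i) -> x \in sv (star0 e j) -> charM0 e i j = CVzero.
Proof.
move=> nm xi xj; rewrite /charM0 /char_entry; destruct excluded_middle_informative as [H|H']; first by exfalso; exact (nm H).
by case: ifP => // Hd; have := disjointFr Hd xj; rewrite xi.
Qed.

Lemma entry_empty N (e : rel 'I_N) i j : ~ mergeable (star0 e i) (star0 e j) ->
  [disjoint sv (star0 e j) & sv (star0 e i)] -> charM0 e i j = CVempty.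
Proof.
move=> nm Hd; rewrite /charM0 /char_entry; destruct excluded_middle_informative as [H|H']; first by exfalso; exact (nm H).
by rewrite /= Hd.
Qed.

Lemma nonsink_bound N (e : rel 'I_N)
  (Hsinks_last : forall k l : 'I_N, (k <= l)%N -> sink e k -> sink e l) (i : 'I_N) :
  (i < N - #|[set k | sink e k]|)%N -> ~~ sink e i.
Proof.
move=> Hi; apply/negP => si.
have H1 : #|~: [set k | sink e k]| <= #|[set k : 'I_N | (k < i)%N]|.
  apply: subset_leq_card; apply/subsetP => k; rewrite !inE; apply: contraR.
  by rewrite -leqNgt => ik; apply: Hsinks_last si.
have H2 : #|[set k : 'I_N | (k < i)%N]| <= i.
  rewrite -(size_iota 0 i) cardE -(size_map val); apply: uniq_leq_size.
    by rewrite map_inj_uniq ?enum_uniq //; exact: val_inj.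
  by move=> x /mapP [k]; rewrite mem_enum inE size_iota => ki ->; rewrite mem_iota add0n leq0n.
have := cardsC [set k | sink e k]; rewrite card_ord => H3.
have H4 := leq_trans H1 H2.
lia.
Qed.

Local Open Scope ring_scope.

Lemma aval_eq N (e : rel 'I_N) (Hs : irreflexive e) (i j : 'I_N) : i != j ->
  aval e i j = (\sum_l ((e i l) && (e j l) : nat))%N%:R + 'i * ((e i j) + (e j i))%N%:R.
Proof.
move=> ij; rewrite /aval !mxE.
have -> : \sum_l ((col i (adjmx e + 'i%:M))^T 0 l * col j (adjmx e + 'i%:M) l 0)
   = \sum_l (((e i l) && (e j l) : nat)%:R + 'i * (((l == j) && e i l : nat)%:R
        + ((l == i) && e j l : nat)%:R)).
  apply: eq_bigr => l _; rewrite !mxE.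
  have : ~~ ((l == i) && (l == j)).
    by apply/negP => /andP [/eqP -> /eqP ij']; rewrite ij' eqxx in ij.
  move: (l == i) (l == j) (e i l) (e j l) => [] [] [] [] //= _;
   rewrite ?mulr0n ?mulr1n ?addr0 ?add0r ?mulr0 ?mul0r ?mulr1 ?mul1r //=; ring.
have H1 : forall k (f : 'I_N -> bool), \sum_l (((l == k) && f l : nat)%:R : algC) = (f k : nat)%:R.
  move=> k f; rewrite (bigD1 k) //= eqxx big1 ?addr0 //.
  by move=> l /negbTE ->.
by rewrite big_split /= -mulr_sumr big_split /= !H1 natr_sum natrD.
Qed.


Theorem lemma5 (N : nat) (e : rel 'I_N)
  (Hsimple : irreflexive e)
  (Hsinks_last : forall k l : 'I_N, (k <= l)%N -> sink e k -> sink e l) :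
  forall i j : 'I_N,
    (i < N - #|[set k | sink e k]|)%N -> (j < N - #|[set k | sink e k]|)%N ->
    (i = j -> charM0 e i j = CVzero) /\
    (i <> j ->
      [/\ ('Re (aval e i j) = 0 /\ 'Im (aval e i j) != 0 /\ adjmx e i j != 0 ->
             charM0 e i j = CVone),
          ('Re (aval e i j) != 0 \/
             ('Re (aval e i j) = 0 /\ 'Im (aval e i j) != 0 /\ adjmx e i j = 0) ->
             charM0 e i j = CVzero)
        & (aval e i j = 0 -> charM0 e i j = CVempty)]).
Proof.
move=> i j Hi Hj.
have si := @nonsink_bound _ _ Hsinks_last _ Hi.
have sj := @nonsink_bound _ _ Hsinks_last _ Hj.
split.
  move=> ij; subst j.
  apply: (@entry_zero _ _ _ _ i (@nomerge_self _ _ i si)); by rewrite !inE eqxx.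
move/eqP=> ij.
have Ea := @aval_eq _ _ Hsimple i j ij.
have ERe : 'Re (aval e i j) = (\sum_l ((e i l) && (e j l) : nat))%N%:R.
  by rewrite Ea Re_rect ?realn.
have EIm : 'Im (aval e i j) = ((e i j) + (e j i))%N%:R.
  by rewrite Ea Im_rect ?realn.
have EA : adjmx e i j = (e j i)%:R by rewrite mxE.
have HNC : ('Re (aval e i j) == 0) = [forall u, ~~ (e i u && e j u)].
  rewrite ERe pnatr_eq0 sum_nat_eq0; apply/forallP/forallP => H u; have := H u;
   by case: (e i u && e j u).
have ji : j != i by rewrite eq_sym.
split.
- case=> /eqP Re0 [Im0 A0].
  have eji : e j i by move: A0; rewrite EA; case: (e j i); rewrite ?eqxx.
  apply: entry_one; apply: merge => //.
  by move=> u; move: Re0; rewrite HNC => /forallP.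
- case=> [Re0 | [Re0 [Im0 A0]]].
  + move: Re0; rewrite HNC negb_forall => /existsP [u]; rewrite negbK => /andP [eiu eju].
    apply: (@entry_zero _ _ _ _ u (@nomerge_common _ _ i j u eiu eju ij)); by rewrite !inE ?eiu ?eju orbT.
  + have nji : ~~ e j i by move: A0; rewrite EA; case: (e j i) => //; move/eqP; rewrite oner_eq0.
    have eij : e i j by move: Im0; rewrite EIm (negbTE nji); case: (e i j); rewrite ?eqxx.
    apply: (@entry_zero _ _ _ _ j (@nomerge_noedge _ _ i j nji ij)); by rewrite !inE ?eij ?eqxx ?orbT.
- move=> a0.
  have Re0 : 'Re (aval e i j) == 0 by rewrite a0 raddf0.
  have Im0 : 'Im (aval e i j) == 0 by rewrite a0 raddf0.
  move: Re0; rewrite HNC => /forallP NC.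
  move: Im0; rewrite EIm pnatr_eq0 addn_eq0 !eqb0 => /andP [nij nji].
  apply: (@entry_empty _ _ i j); first exact: (@nomerge_noedge _ _ i j nji ij).
  rewrite disjoint_subset; apply/subsetP => x; rewrite !inE.
  case/orP => [/eqP -> | ejx]; first by rewrite (negbTE ji) (negbTE nij).
  apply/negP => /orP [/eqP xi | eix]; first by rewrite -xi ejx in nji.
  by have := NC x; rewrite eix ejx.
Qed.
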